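(* Let $m,n\ge 2$ and let $W$ be a channel from $\{1,\dots,m\}$ to $\{1,\dots,n\}$. Let $g=\max_{1\le j\le n}(\mathbf{1}W)_j$ and $\alpha_j=\min_{1\le i\le m}W_{i,j}$. Then \[ \underline{P}_W(1)=(g-m+1)_+\quad\text{and}\quad \overline{P}_W(1)=\sum_{j=1}^n\alpha_j. \]
   Context: A channel is a row-stochastic matrix; $\mathcal{D}$ is the set of deterministic (0-1) channels from $\{1,\dots,m\}$ to $\{1,\dots,n\}$, $\mathrm{rank}(D)$ the matrix rank. $\Lambda(W)=\{\lambda\text{ probability distribution on }\mathcal{D}: W=\sum_D\lambda_DD\}$. $P_\lambda(r)=\lambda(\{D:\mathrm{rank}(D)=r\})$, $\underline{P}_W(r)=\min_{\lambda\in\Lambda(W)}P_\lambda(r)$, $\overline{P}_W(r)=\max_{\lambda\in\Lambda(W)}P_\lambda(r)$. $\mathbf{1}$ is the all-one row vector of length $m$ ($\mathbf{1}W$ = column sums), and $(x)_+=\max(x,0)$. *)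

(* Defs.v *)
From HB Require Import structures.
From mathcomp Require Import all_boot all_order all_algebra.
Set Implicit Arguments. Unset Strict Implicit. Unset Printing Implicit Defensive.
Import Order.TTheory GRing.Theory Num.Theory.
Local Open Scope ring_scope.

Definition channel (R : realFieldType) (m n : nat) (W : 'M[R]_(m, n)) : Prop :=
  (forall i j, 0 <= W i j) /\ (forall i, \sum_(j < n) W i j = 1).

Definition detmx (R : realFieldType) (m n : nat) (f : {ffun 'I_m -> 'I_n})
  : 'M[R]_(m, n) := \matrix_(i < m, j < n) (f i == j)%:R.

Definition prob_on_det (R : realFieldType) (m n : nat)
  (lam : {ffun {ffun 'I_m -> 'I_n} -> R}) : Prop :=
  (forall f, 0 <= lam f) /\ \sum_f lam f = 1.

Definition in_Lambda (R : realFieldType) (m n : nat) (W : 'M[R]_(m, n))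
  (lam : {ffun {ffun 'I_m -> 'I_n} -> R}) : Prop :=
  prob_on_det lam /\ W = \sum_f lam f *: detmx R f.

Definition P_lam (R : realFieldType) (m n : nat)
  (lam : {ffun {ffun 'I_m -> 'I_n} -> R}) (r : nat) : R :=
  \sum_(f | \rank (detmx R f) == r) lam f.

Definition is_minP (R : realFieldType) (m n : nat) (W : 'M[R]_(m, n))
  (r : nat) (v : R) : Prop :=
  (exists lam, in_Lambda W lam /\ P_lam lam r = v) /\
  (forall lam, in_Lambda W lam -> v <= P_lam lam r).

Definition is_maxP (R : realFieldType) (m n : nat) (W : 'M[R]_(m, n))
  (r : nat) (v : R) : Prop :=
  (exists lam, in_Lambda W lam /\ P_lam lam r = v) /\
  (forall lam, in_Lambda W lam -> P_lam lam r <= v).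

(* g = max_j (1 W)_j  (column sums are >= 0, so the default 0 is harmless) *)
Definition max_colsum (R : realFieldType) (m n : nat) (W : 'M[R]_(m, n)) : R :=
  \big[Num.max/0]_(j < n) \sum_(i < m) W i j.

(* alpha_j = min_i W_{i,j}  (entries are <= 1, so the default 1 is harmless) *)
Definition col_min (R : realFieldType) (m n : nat) (W : 'M[R]_(m, n)) (j : 'I_n) : R :=
  \big[Num.min/1]_(i < m) W i j.

Definition pos_part (R : realFieldType) (x : R) : R := Num.max x 0.

(* Main.v *)
Require Import Defs.
From HB Require Import structures.
From mathcomp Require Import all_boot all_order all_algebra.
From mathcomp Require Import lra zify.
Set Implicit Arguments. Unset Strict Implicit. Unset Printing Implicit Defensive.
Import Order.TTheory GRing.Theory Num.Theory.
Local Open Scope ring_scope.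

Section Helpers.
Variable R : realFieldType.

Lemma sum_deltal (I : finType) (x : I) (G : I -> R) :
  \sum_i (i == x)%:R * G i = G x.
Proof.
rewrite (bigD1 x) //= eqxx mul1r big1 ?addr0 // => i /negbTE ->.
by rewrite mul0r.
Qed.

Lemma sum_deltar (I : finType) (x : I) (G : I -> R) :
  \sum_i (x == i)%:R * G i = G x.
Proof. by rewrite -(sum_deltal x); apply: eq_bigr => i _; rewrite eq_sym. Qed.

Lemma sum_delta1 (I : finType) (x : I) : \sum_i (i == x)%:R = 1 :> R.
Proof.
rewrite (bigD1 x) //= eqxx big1 ?addr0 // => i /negbTE ->. by [].
Qed.

Lemma sum_delta1r (I : finType) (x : I) : \sum_i (x == i)%:R = 1 :> R.
Proof.
rewrite (bigD1 x) //= eqxx big1 ?addr0 // => i; rewrite eq_sym => /negbTE ->. by [].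
Qed.

Lemma le_sum_term (I : finType) (P : pred I) (F : I -> R) (x : I) :
  (forall i, 0 <= F i) -> P x -> F x <= \sum_(i | P i) F i.
Proof.
move=> F0 Px; rewrite (bigD1 x) //= lerDl; exact: sumr_ge0.
Qed.

Lemma le_sum_two (I : finType) (F : I -> R) (x y : I) :
  (forall i, 0 <= F i) -> x != y -> F x + F y <= \sum_i F i.
Proof.
move=> F0 xy; rewrite (bigD1 x) //= lerD2l; apply: le_sum_term => //.
by rewrite eq_sym.
Qed.

Lemma le_sum_three (I : finType) (F : I -> R) (x y z : I) :
  (forall i, 0 <= F i) -> x != y -> x != z -> y != z ->
  F x + F y + F z <= \sum_i F i.
Proof.
move=> F0 xy xz yz; rewrite (bigD1 x) //= -addrA lerD2l.
rewrite (bigD1 y) /=; last by rewrite eq_sym.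
rewrite lerD2l; apply: le_sum_term => //.
by rewrite eq_sym xz eq_sym yz.
Qed.

Lemma sum_const_R (I : finType) : \sum_(i : I) (1 : R) = #|I|%:R.
Proof. by rewrite sumr_const. Qed.

End Helpers.

Definition constf (m n : nat) (f : {ffun 'I_m -> 'I_n}) : bool :=
  [forall i, forall i', f i == f i'].

Lemma rank_detmx (R : realFieldType) (m n : nat) (f : {ffun 'I_m -> 'I_n}) :
  (0 < m)%N -> (\rank (detmx R f) == 1%N) = constf f.
Proof.
move=> m0.
have i0 : 'I_m := Ordinal m0.
apply/idP/idP.
- move/eqP=> r1; apply/forallP => i1; apply/forallP => i2; apply/negPn/negP => neq.
  pose M : 'M[R]_(2, m) := \matrix_(k, i) (i == if k == 0 then i1 else i2)%:R.
  pose N : 'M[R]_(n, 2) := \matrix_(j, k) (j == if k == 0 then f i1 else f i2)%:R.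
  have : M *m detmx R f *m N = 1%:M.
    apply/matrixP => k k'; rewrite !mxE.
    under eq_bigr => j _ do rewrite !mxE.
    under eq_bigr => j _ do under eq_bigr => i _ do rewrite !mxE.
    under eq_bigr => j _ do rewrite (sum_deltal (if k == 0 then i1 else i2) (fun i => (f i == j)%:R)).
    rewrite (sum_deltar (f (if k == 0 then i1 else i2))
       (fun j => (j == (if k' == 0 then f i1 else f i2))%:R)).
    case: k k' => [[|[|k]] hk] [[|[|k']] hk'] //=; rewrite ?eqxx //.
    + by rewrite (negbTE neq).
    + by rewrite eq_sym (negbTE neq).
  move/mulmx1_min_rank; by rewrite r1.
- move=> cf.
  have -> : detmx R f = (const_mx 1 : 'M[R]_(m, 1)) *m (\row_j (f i0 == j)%:R).
    apply/matrixP => i j; rewrite !mxE big_ord1 !mxE mul1r.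
    by move/forallP: cf => /(_ i) /forallP /(_ i0) /eqP ->.
  rewrite eqn_leq mulmx_max_rank /= lt0n mxrank_eq0; apply/negP => /eqP/matrixP/(_ i0 (f i0)).
  by rewrite !mxE big_ord1 !mxE eqxx mul1r => /eqP; rewrite oner_eq0.
Qed.

Section Peel.
Variables (R : realFieldType) (m n : nat).
Hypothesis hm : (1 < m)%N.

Definition colsum (V : 'M[R]_(m, n)) j := \sum_i V i j.
Definition kf (f : {ffun 'I_m -> 'I_n}) j : R := \sum_i (f i == j)%:R.
Definition M1 : R := m%:R - 1.
Definition supp (V : 'M[R]_(m, n)) := #|[set p : 'I_m * 'I_n | V p.1 p.2 != 0]|.
Definition ntight (V : 'M[R]_(m, n)) s := #|[set j | colsum V j != M1 * s]|.
Definition good (V : 'M[R]_(m, n)) s :=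
  [/\ forall i j, 0 <= V i j, forall i, \sum_j V i j = s & forall j, colsum V j <= M1 * s].

Lemma kf_split (f : {ffun 'I_m -> 'I_n}) j : kf f j + \sum_i (f i != j)%:R = m%:R.
Proof.
rewrite /kf -big_split /=.
transitivity (\sum_(i : 'I_m) (1 : R)); last by rewrite sum_const_R card_ord.
by apply: eq_bigr => i _; case: (f i == j); rewrite /= ?addr0 ?add0r.
Qed.

Lemma kf_le (f : {ffun 'I_m -> 'I_n}) j : (exists i, f i != j) -> kf f j <= M1.
Proof.
case=> i hi; have := kf_split f j.
have : (f i != j)%:R <= \sum_i (f i != j)%:R :> R.
  by apply: le_sum_term => // k; case: (f k != j).
rewrite hi /=.
rewrite /M1; lra.
Qed.

Lemma kf_ge0 (f : {ffun 'I_m -> 'I_n}) j : 0 <= kf f j.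
Proof. by apply: sumr_ge0 => i _; case: (f i == j). Qed.

Definition peelmx (V : 'M[R]_(m, n)) t (f : {ffun 'I_m -> 'I_n}) : 'M[R]_(m, n) :=
  \matrix_(i, j) (V i j - t * (f i == j)%:R).

Lemma colsum_peel V t (f : {ffun 'I_m -> 'I_n}) j : colsum (peelmx V t f) j = colsum V j - t * kf f j.
Proof.
rewrite /colsum /kf mulr_sumr -sumrB; apply: eq_bigr => i _; by rewrite mxE.
Qed.

Lemma step V s (f : {ffun 'I_m -> 'I_n}) :
  good V s ->
  (forall i, 0 < V i (f i)) -> (forall j, exists i, f i != j) ->
  (forall j, colsum V j = M1 * s -> kf f j = M1) ->
  exists t, [/\ 0 < t, good (peelmx V t f) (s - t) &
     (supp (peelmx V t f) + ntight (peelmx V t f) (s - t) < supp V + ntight V s)%N].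
Proof.
move=> [V0 Vr Vc] fpos fnc ftight.
have m0 : (0 < m)%N by apply: ltnW.
pose I := ('I_m + 'I_n)%type.
pose P := fun x : I => match x with inl _ => true | inr j => kf f j < M1 end.
pose F := fun x : I => match x with
  | inl i => V i (f i) | inr j => (M1 * s - colsum V j) / (M1 - kf f j) end.
have Pi0 : P (inl (Ordinal m0)) by [].
case: (arg_minP F Pi0) => x0 Px0 Hmin.
have nottight j : kf f j < M1 -> colsum V j < M1 * s.
  move=> hk; rewrite lt_neqAle Vc andbT; apply/eqP => /ftight.
  by move=> e; move: hk; rewrite e ltxx.
have Fj j : kf f j < M1 -> (F x0 <= F (inr j)) -> F x0 * (M1 - kf f j) <= M1 * s - colsum V j.
  move=> hk h; rewrite -ler_pdivlMr //; last by rewrite subr_gt0.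
have Fj' j : kf f j < M1 -> F x0 * (M1 - kf f j) <= M1 * s - colsum V j.
  move=> hk; exact: (Fj j hk (Hmin (inr j) hk)).
clear Fj.
set t := F x0.
have tpos : 0 < t.
  rewrite /t; case hx : x0 Px0 => [i|j] /= hP; first exact: fpos.
  apply: divr_gt0; first by rewrite subr_gt0; exact: nottight.
  by rewrite subr_gt0.
have Vt i : t <= V i (f i) by exact: (Hmin (inl i)).
exists t; split => //.
- split.
  + move=> i j; rewrite mxE; case: eqP => [<-|_]; first by rewrite mulr1 subr_ge0.
    by rewrite mulr0 subr0.
  + move=> i; rewrite -(Vr i) -[in RHS](mulr1 t) -(@sum_delta1r R _ (f i)) mulr_sumr -sumrB.
    by apply: eq_bigr => j _; rewrite mxE.
  + move=> j; rewrite colsum_peel.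
    case: (ltP (kf f j) M1) => hk.
    * have := Fj' j hk; rewrite -/t; lra.
    * have hk' : kf f j = M1 by apply/eqP; rewrite eq_le hk kf_le.
      rewrite hk'; have := Vc j; lra.
- have sub1 : [set p : 'I_m * 'I_n | peelmx V t f p.1 p.2 != 0] \subset
              [set p : 'I_m * 'I_n | V p.1 p.2 != 0].
    apply/subsetP => [[i j]]; rewrite !inE /= mxE; apply: contra => /eqP V0'.
    case: (f i =P j) => [e|_]; last by rewrite V0' mulr0 subr0.
    by move: (fpos i); rewrite e V0' ltxx.
  have sub2 : [set j | colsum (peelmx V t f) j != M1 * (s - t)] \subset
              [set j | colsum V j != M1 * s].
    apply/subsetP => j; rewrite !inE; apply: contra => /eqP e.
    rewrite colsum_peel e (ftight j e); apply/eqP; lra.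
  have c1 := subset_leq_card sub1; have c2 := subset_leq_card sub2.
  rewrite /supp /ntight.
  case hx : x0 Px0 => [i|j] /= hP.
  + have : [set p : 'I_m * 'I_n | peelmx V t f p.1 p.2 != 0] \proper
              [set p : 'I_m * 'I_n | V p.1 p.2 != 0].
      apply/properP; split => //; exists (i, f i); rewrite !inE /=.
        by rewrite gt_eqF // fpos.
      by rewrite mxE eqxx mulr1 negbK /t hx /= subrr.
    move/proper_card => c3; rewrite -addSn; exact: leq_add c3 c2.
  + have : [set j | colsum (peelmx V t f) j != M1 * (s - t)] \proper
              [set j | colsum V j != M1 * s].
      apply/properP; split => //; exists j; rewrite !inE /=.
        by rewrite lt_eqF // nottight.
      have ht : t * (M1 - kf f j) = M1 * s - colsum V j.
        by rewrite /t hx /= divfK // subr_eq0 gt_eqF.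
      rewrite negbK colsum_peel; apply/eqP; lra.
    move/proper_card => c3; rewrite -addnS; exact: leq_add c1 c3.
Qed.

End Peel.

Section Find.
Variables (R : realFieldType) (m n : nat).
Hypothesis hm : (1 < m)%N.
Local Notation M1 := (@M1 R m).
Local Notation colsum := (@colsum R m n).
Local Notation kf := (@kf R m n).

Lemma other (i : 'I_m) : exists i', i' != i.
Proof.
have m0 : (0 < m)%N by apply: ltnW.
case: (i =P Ordinal m0) => [->|/eqP h]; last by exists (Ordinal m0); rewrite eq_sym.
by exists (Ordinal hm).
Qed.

Lemma sum_const_x (x : R) : \sum_(i : 'I_m) x = m%:R * x.
Proof. by rewrite sumr_const card_ord mulr_natl. Qed.

Lemma colsum_total (V : 'M[R]_(m, n)) s :
  (forall i, \sum_j V i j = s) -> \sum_j colsum V j = m%:R * s.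
Proof.
move=> Vr; rewrite /colsum exchange_big /= -sum_const_x.
by apply: eq_bigr => i _; rewrite Vr.
Qed.

Lemma entry_le (V : 'M[R]_(m, n)) s i j :
  (forall i j, 0 <= V i j) -> (forall i, \sum_j V i j = s) -> V i j <= s.
Proof. move=> V0 Vr; rewrite -(Vr i); exact: le_sum_term. Qed.

Lemma rowpos (V : 'M[R]_(m, n)) s i :
  (forall i j, 0 <= V i j) -> (forall i, \sum_j V i j = s) -> 0 < s -> exists j, 0 < V i j.
Proof.
move=> V0 Vr s0; case: (pickP (fun j => 0 < V i j)) => [j hj|h]; first by exists j.
have : \sum_j V i j <= 0 by apply: sumr_le0 => j _; rewrite leNgt h.
by rewrite Vr leNgt s0.
Qed.

Lemma find_f (V : 'M[R]_(m, n)) s :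
  good V s -> 0 < s ->
  exists f : {ffun 'I_m -> 'I_n},
    [/\ forall i, 0 < V i (f i), forall j, exists i, f i != j &
        forall j, colsum V j = M1 * s -> kf f j = M1].
Proof.
move=> [V0 Vr Vc] s0.
have m0 : (0 < m)%N by apply: ltnW.
have ctot := colsum_total Vr.
case: (pickP (fun j => colsum V j == M1 * s)) => [j0 /eqP hj0|notight]; last first.
  have [g hg] : exists g : {ffun 'I_m -> 'I_n}, forall i, 0 < V i (g i).
    have := fin_all_exists (fun i => rowpos i V0 Vr s0); case=> g hg.
    by exists (finfun g) => i; rewrite ffunE.
  have tv : forall j, colsum V j = M1 * s -> kf g j = M1.
    by move=> j /eqP; rewrite notight.
  case: (boolP [exists j, forall i, g i == j]) => [/existsP [j /forallP hgj]|].
  - case: (boolP [exists i, exists j1, (j1 != j) && (0 < V i j1)]).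
    + move=> /existsP [i1 /existsP [j1 /andP [nj1 pj1]]].
      exists [ffun i => if i == i1 then j1 else g i]; split.
      * by move=> i; rewrite ffunE; case: (i =P i1) => [->|].
      * move=> j'; case: (j' =P j) => [->|/eqP nj'].
          by exists i1; rewrite ffunE eqxx.
        have [i2 hi2] := other i1; exists i2; rewrite ffunE (negbTE hi2).
        by rewrite (eqP (hgj i2)) eq_sym.
      * by move=> j' /eqP; rewrite notight.
    + move=> /existsPn hno.
      have Vij : forall i, V i j = s.
        move=> i; rewrite -(Vr i) (bigD1 j) //= big1 ?addr0 // => j1 nj1.
        apply/eqP; rewrite eq_le V0 andbT leNgt; apply/negP => p.
        by move: (hno i) => /existsPn /(_ j1); rewrite nj1 p.
      have : colsum V j = m%:R * s by rewrite /colsum -sum_const_x; apply: eq_bigr.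
      move: (Vc j) => hc ec; rewrite ec /M1 in hc; lra.
  - move=> /existsPn hng; exists g; split => // j.
    by move: (hng j) => /forallPn [i hi]; exists i.
have [i0 [hi0 hoth]] : exists i0, V i0 j0 < s /\ forall i, i != i0 -> 0 < V i j0.
  case: (pickP (fun i => V i j0 == 0)) => [i0 /eqP z0|nz].
  - exists i0; split; first by rewrite z0.
    move=> i ni; rewrite lt_def V0 andbT; apply/negP => /eqP zi.
    have : colsum V j0 <= \sum_(k : 'I_m) s * (1 - (k == i0)%:R - (k == i)%:R).
      apply: ler_sum => k _.
      case: (k =P i0) => [->|/eqP k0].
        by rewrite eq_sym (negbTE ni) z0 /= mulr1n mulr0n subr0 subrr mulr0.
      case: (k =P i) => [->|/eqP k1].
        by rewrite zi /= mulr1n mulr0n subr0 subrr mulr0.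
      by rewrite /= !mulr0n !subr0 mulr1; exact: entry_le.
    rewrite -mulr_sumr !sumrB sum_const_R card_ord !sum_delta1 hj0 /M1.
    lra.
  - have [i0 hi0] : exists i0, V i0 j0 < s.
      case: (pickP (fun i => V i j0 < s)) => [i0 h|h]; first by exists i0.
      have : \sum_(k : 'I_m) s <= colsum V j0 by apply: ler_sum => k _; rewrite leNgt h.
      rewrite sum_const_x hj0 /M1; lra.
    exists i0; split => // i _; by rewrite lt_def V0 andbT nz.
have [j1 [nj1 pj1]] : exists j1, j1 != j0 /\ 0 < V i0 j1.
  case: (pickP (fun j => (j != j0) && (0 < V i0 j))) => [j1 /andP [a b]|h]; first by exists j1.
  have : \sum_j V i0 j <= V i0 j0.
    rewrite (bigD1 j0) //= -[X in _ <= X]addr0 lerD2l; apply: sumr_le0 => j nj.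
    by move: (h j); rewrite nj /= => /negbT; rewrite -leNgt.
  rewrite Vr; lra.
exists [ffun i => if i == i0 then j1 else j0]; split.
- by move=> i; rewrite ffunE; case: (i =P i0) => [->|/eqP]; [|exact: hoth].
- move=> j; case: (j =P j0) => [->|/eqP nj].
    by exists i0; rewrite ffunE eqxx.
  have [i2 hi2] := other i0; exists i2; rewrite ffunE (negbTE hi2) eq_sym //.
- move=> j hj; case: (j =P j0) => [->|/eqP nj].
  + rewrite /kf.
    transitivity (\sum_(i : 'I_m) (1 - (i == i0)%:R) : R).
      apply: eq_bigr => i _; rewrite ffunE; case: (i =P i0) => _.
        by rewrite (negbTE nj1) subrr.
      by rewrite eqxx subr0.
    by rewrite sumrB sum_const_R card_ord sum_delta1.
  + have c2 := le_sum_two (F := colsum V) (fun k => sumr_ge0 _ (fun i _ => V0 i k)) nj.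
    rewrite ctot hj hj0 in c2.
    have m2 : m = 2%N.
      apply/eqP; rewrite eqn_leq hm andbT -(ler_nat R).
      have : (m%:R - 2) * s <= 0 :> R by rewrite /M1 in c2; lra.
      by rewrite pmulr_lle0 // subr_le0.
    have M11 : M1 = 1 by rewrite /M1 m2; apply/eqP; rewrite subr_eq.
    have ej : j1 = j.
      apply/eqP; apply/negPn/negP => nj1j.
      have nj1' : j != j1 by rewrite eq_sym.
      have nj01 : j0 != j1 by rewrite eq_sym.
      have c3 := le_sum_three (F := colsum V) (fun k => sumr_ge0 _ (fun i _ => V0 i k))
          nj nj1' nj01.
      have cp : V i0 j1 <= colsum V j1.
        by rewrite /colsum; apply: (le_sum_term (F := fun i => V i j1)).
      have m2R : m%:R = 2 :> R by rewrite m2.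
      rewrite ctot hj hj0 M11 m2R in c3; lra.
    rewrite -ej M11 /kf.
    transitivity (\sum_(i : 'I_m) ((i == i0)%:R) : R); last exact: sum_delta1.
    apply: eq_bigr => i _; rewrite ffunE; case: (i =P i0) => _; first by rewrite eqxx.
    by rewrite eq_sym (negbTE nj1).
Qed.

End Find.

Section K.
Variables (R : realFieldType) (m n : nat).
Hypothesis hm : (1 < m)%N.

Definition decomp (V : 'M[R]_(m, n)) s (mu : {ffun {ffun 'I_m -> 'I_n} -> R}) :=
  [/\ forall f, 0 <= mu f, \sum_f mu f = s,
      forall i j, V i j = \sum_f mu f * (f i == j)%:R &
      forall f, constf f -> mu f = 0].

Definition meas (V : 'M[R]_(m, n)) s := (supp V + ntight V s)%N.

Lemma K_step V s :
  good V s ->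
  (forall V' s', good V' s' -> (meas V' s' < meas V s)%N -> exists mu, decomp V' s' mu) ->
  exists mu, decomp V s mu.
Proof.
move=> hg IH; have [V0 Vr Vc] := hg.
have m0 : (0 < m)%N by apply: ltnW.
have s0 : 0 <= s by rewrite -(Vr (Ordinal m0)); apply: sumr_ge0.
case: (ltrP 0 s) => sp; last first.
  have s00 : s = 0 by apply/eqP; rewrite eq_le sp s0.
  exists [ffun _ => 0]; split.
  - by move=> f; rewrite ffunE.
  - by rewrite s00 big1 // => f _; rewrite ffunE.
  - move=> i j; rewrite big1; last by move=> f _; rewrite ffunE mul0r.
    move: (Vr i); rewrite s00 => /psumr_eq0P; apply => // k _.
  - by move=> f _; rewrite ffunE.
have [f [fpos fnc ftight]] := find_f hm hg sp.
have [t [tpos hg' hlt]] := step hm hg fpos fnc ftight.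
have [mu' [mu0 musum muV mucst]] := IH _ _ hg' hlt.
exists [ffun g => mu' g + t * (g == f)%:R]; split.
- by move=> g; rewrite ffunE addr_ge0 // mulr_ge0 // ?ltW // ler0n.
- under eq_bigr => g _ do rewrite ffunE.
  by rewrite big_split /= -mulr_sumr sum_delta1 musum mulr1 subrK.
- move=> i j.
  under eq_bigr => g _ do rewrite ffunE mulrDl -mulrA.
  rewrite big_split /= -mulr_sumr (sum_deltal f (fun g => (g i == j)%:R)) -muV mxE.
  by rewrite subrK.
- move=> g cg; rewrite ffunE mucst //.
  case: (g =P f) => [e|_]; last by rewrite mulr0 addr0.
  have [i hi] := fnc (f (Ordinal m0)).
  move: cg; rewrite e => /forallP /(_ i) /forallP /(_ (Ordinal m0)).
  by rewrite (negbTE hi).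
Qed.

Lemma K V s : good V s -> exists mu, decomp V s mu.
Proof.
move: {2}(meas V s) (leqnn (meas V s)) => N.
elim: N V s => [|N IHN] V s hN hg; apply: K_step => // V' s' hg' hlt.
  by move: (leq_trans hlt hN).
by apply: IHN => //; rewrite -ltnS; exact: leq_trans hlt hN.
Qed.

End K.

Section Main.
Variables (R : realFieldType) (m n : nat).
Hypothesis hm : (1 < m)%N.

Definition cst (j : 'I_n) : {ffun 'I_m -> 'I_n} := [ffun _ => j].

Lemma constf_cst j : constf (cst j).
Proof. by apply/forallP => i; apply/forallP => i'; rewrite !ffunE. Qed.

Lemma cst_inj j k : (cst j == cst k) = (j == k).
Proof.
have m0 : (0 < m)%N by apply: ltnW.
apply/eqP/eqP => [/ffunP /(_ (Ordinal m0))|->]; last by [].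
by rewrite !ffunE.
Qed.

Lemma sum_constf (F : {ffun 'I_m -> 'I_n} -> R) :
  \sum_(g | constf g) F g = \sum_j F (cst j).
Proof.
have m0 : (0 < m)%N by apply: ltnW.
transitivity (\sum_(g | constf g) \sum_j (cst j == g)%:R * F g).
  apply: eq_bigr => g cg; rewrite -mulr_suml.
  have -> : g = cst (g (Ordinal m0)).
    apply/ffunP => i; rewrite ffunE.
    by move/forallP: cg => /(_ i) /forallP /(_ (Ordinal m0)) /eqP.
  under eq_bigr => j _ do rewrite cst_inj.
  by rewrite sum_delta1 mul1r.
rewrite exchange_big /=; apply: eq_bigr => j _.
rewrite (bigD1 (cst j)) ?constf_cst //= eqxx mul1r big1 ?addr0 //.
by move=> g /andP [_ hg]; rewrite eq_sym (negbTE hg) mul0r.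
Qed.

Lemma P_lam_eq (lam : {ffun {ffun 'I_m -> 'I_n} -> R}) :
  P_lam lam 1 = \sum_(j : 'I_n) lam (cst j).
Proof.
rewrite /P_lam -sum_constf; apply: eq_bigl => g.
by rewrite rank_detmx // ltnW.
Qed.

Lemma Lambda_entry (W : 'M[R]_(m, n)) lam i j :
  in_Lambda W lam -> W i j = \sum_f lam f * (f i == j)%:R.
Proof.
move=> [_ ->]; rewrite summxE; apply: eq_bigr => f _; by rewrite !mxE.
Qed.

Lemma lam_cst_le (W : 'M[R]_(m, n)) lam i j :
  in_Lambda W lam -> lam (cst j) <= W i j.
Proof.
move=> hL; have [[l0 l1] _] := hL.
rewrite (Lambda_entry i j hL).
have := le_sum_term (P := xpredT) (F := fun f => lam f * (f i == j)%:R) (x := cst j).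
rewrite ffunE eqxx mulr1; apply => // f.
by rewrite mulr_ge0 // ler0n.
Qed.

Lemma G (W : 'M[R]_(m, n)) (a : 'I_n -> R) V s :
  (forall j, 0 <= a j) -> good V s -> (forall i j, W i j = V i j + a j) ->
  \sum_j a j + s = 1 ->
  exists lam, in_Lambda W lam /\ P_lam lam 1 = \sum_j a j.
Proof.
move=> a0 hg hW hs.
have [mu [mu0 musum muV mucst]] := K hm hg.
pose lam := [ffun g => mu g + \sum_j a j * (g == cst j)%:R].
have lamc j : lam (cst j) = a j.
  rewrite ffunE mucst ?constf_cst // add0r.
  under eq_bigr => k _ do rewrite cst_inj.
  by rewrite (bigD1 j) //= eqxx mulr1 big1 ?addr0 // => k; rewrite eq_sym => /negbTE ->; rewrite mulr0.
exists lam; split; last by rewrite P_lam_eq; apply: eq_bigr => j _; rewrite lamc.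
split; first split.
- move=> g; rewrite ffunE addr_ge0 // sumr_ge0 // => j _.
  by rewrite mulr_ge0 // ler0n.
- under eq_bigr => g _ do rewrite ffunE.
  rewrite big_split /= musum exchange_big /= addrC -[RHS]hs; congr (_ + _).
  by apply: eq_bigr => j _; rewrite -mulr_sumr sum_delta1 mulr1.
- apply/matrixP => i j; rewrite summxE hW muV.
  under [in RHS]eq_bigr => g _ do rewrite !mxE ffunE mulrDl.
  rewrite big_split /=; congr (_ + _).
  under eq_bigr => g _ do rewrite mulr_suml.
  rewrite exchange_big /=.
  rewrite (bigD1 j) //= [X in _ + X]big1 ?addr0.
    rewrite (bigD1 (cst j)) //= [X in _ + X]big1 ?addr0 ?ffunE ?eqxx ?mulr1 //.
    by move=> g /negbTE ->; rewrite mulr0 mul0r.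
  move=> k nk; apply: big1 => g _.
  case: (g =P cst k) => [->|_]; last by rewrite mulr0 mul0r.
  by rewrite ffunE (negbTE nk) mulr0.
Qed.

End Main.


Section Parts.
Variables (R : realFieldType) (m n : nat).
Hypothesis hm : (1 < m)%N.
Hypothesis hn : (0 < n)%N.
Local Notation cst := (@cst m n).
Local Notation M1 := (@M1 R m).
Local Notation colsum := (@colsum R m n).
Local Notation kf := (@kf R m n).

Lemma lam_le1 (W : 'M[R]_(m, n)) lam f : in_Lambda W lam -> lam f <= 1.
Proof.
move=> [[l0 l1] _]; rewrite -l1; exact: (le_sum_term (P := xpredT) (F := lam)).
Qed.

Lemma min_part (W : 'M[R]_(m, n)) : channel W ->
  is_minP W 1 (pos_part (max_colsum W - m%:R + 1)).
Proof.
move=> [W0 Wr].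
have m0 : (0 < m)%N by apply: ltnW.
have [js _ hjs] := @eq_bigmax _ R _ 0 (Ordinal hn) xpredT (fun j => colsum W j) isT
   (fun j _ => sumr_ge0 _ (fun i _ => W0 i j)).
have gE : max_colsum W = colsum W js := hjs.
have gle j : colsum W j <= max_colsum W.
  exact (@le_bigmax _ R _ 0 (fun j => colsum W j) j).
have ctot := colsum_total Wr.
set g := max_colsum W in gE gle *.
have Wle1 i j : W i j <= 1 := entry_le i j W0 Wr.
have cge0 j : 0 <= colsum W j by apply: sumr_ge0 => i _.
split.
- case: (ltrP 0 (g - m%:R + 1)) => ht; last first.
  + rewrite /pos_part max_r //.
    have hg : good W 1 by split => // j; rewrite /M1 mulr1; have := gle j; lra.
    have hs : \sum_(j < n) (0 : R) + 1 = 1 by rewrite big1 // add0r.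
    have [lam [hL hP]] := G hm (a := fun _ => 0) (W := W)
       (fun _ => lexx 0) hg (fun i j => esym (addr0 _)) hs.
    by exists lam; split => //; rewrite hP big1.
  + rewrite /pos_part max_l ?ltW //.
    set t := g - m%:R + 1 in ht *.
    have htE : t = g - m%:R + 1 by [].
    pose a := fun j : 'I_n => (j == js)%:R * t.
    pose V := \matrix_(i, j) (W i j - a j) : 'M[R]_(m, n).
    have suma : \sum_j a j = t by rewrite /a (sum_deltal js (fun _ => t)).
    have V0 : forall i j, 0 <= V i j.
      move=> i j; rewrite mxE /a; case: (j =P js) => [->|_]; last by rewrite mul0r subr0.
      rewrite mul1r subr_ge0.
      have : colsum W js <= \sum_(k : 'I_m) ((k == i)%:R * W i js + (1 - (k == i)%:R)).
        apply: ler_sum => k _; case: (k =P i) => [->|_]; first by rewrite mul1r subrr addr0.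
        by rewrite mul0r add0r subr0.
      rewrite big_split /= (sum_deltal i (fun _ => W i js)) sumrB sum_const_R card_ord sum_delta1.
      rewrite -gE htE; lra.
    have Vr : forall i, \sum_j V i j = 1 - t.
      move=> i; under eq_bigr => j _ do rewrite mxE.
      by rewrite sumrB Wr suma.
    have a0 : forall j, 0 <= a j by move=> j; rewrite /a mulr_ge0 // ?ler0n // ltW.
    have hg : good V (1 - t).
      split => // j.
      have -> : colsum V j = colsum W j - m%:R * a j.
        by rewrite /colsum -sum_const_x -sumrB; apply: eq_bigr => i _; rewrite mxE.
      rewrite /a /M1; case: (j =P js) => [->|/eqP nj].
        rewrite mul1r -gE htE; lra.
      rewrite mul0r mulr0 subr0.
      have c2 := le_sum_two (F := colsum W) cge0 nj.
      rewrite ctot mulr1 -gE in c2.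
      have h2 : 0 <= (m%:R - 2) * (m%:R - g) :> R.
        apply: mulr_ge0; first by rewrite subr_ge0 (ler_nat R 2 m).
        have := cge0 j; lra.
      rewrite htE; have := cge0 j; lra.
    have hWV : forall i j, W i j = V i j + a j by move=> i j; rewrite mxE subrK.
    have hs : \sum_j a j + (1 - t) = 1 by rewrite suma addrC subrK.
    have [lam [hL hP]] := G hm a0 hg hWV hs.
    by exists lam; split => //; rewrite hP suma.
- move=> lam hL; have [[l0 l1] _] := hL.
  rewrite P_lam_eq //.
  have Pge0 : 0 <= \sum_(j : 'I_n) lam (cst j) by apply: sumr_ge0.
  suff hx : g - m%:R + 1 <= \sum_(j : 'I_n) lam (cst j).
    by rewrite /pos_part; case: (ltrP (g - m%:R + 1) 0).
  have kb (f : {ffun 'I_m -> 'I_n}) : kf f js <= M1 + (f == cst js)%:R :> R.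
    case: (f =P cst js) => [->|nf].
      rewrite /kf /M1; under eq_bigr => i _ do rewrite ffunE eqxx.
      by rewrite sum_const_R card_ord /= subrK.
    case: (boolP [exists i, f i != js]) => [/existsP h|/existsPn h].
      by rewrite /= addr0; apply: kf_le.
    exfalso; apply: nf; apply/ffunP => i; rewrite ffunE.
    by move: (h i); rewrite negbK => /eqP.
  have : colsum W js <= M1 + lam (cst js).
    have -> : colsum W js = \sum_f lam f * kf f js.
      rewrite /colsum; under eq_bigr => i _ do rewrite (Lambda_entry i js hL).
      by rewrite exchange_big /=; apply: eq_bigr => f _; rewrite /kf mulr_sumr.
    apply: (le_trans (y := \sum_f lam f * (M1 + (f == cst js)%:R))).
      by apply: ler_sum => f _; apply: ler_wpM2l.
    under eq_bigr => f _ do rewrite mulrDr mulrC.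
    rewrite big_split /= -mulr_sumr l1 mulr1 lerD2l.
    under eq_bigr => f _ do rewrite mulrC.
    by rewrite (sum_deltal (cst js) lam).
  have : lam (cst js) <= \sum_(j : 'I_n) lam (cst j).
    exact: (le_sum_term (P := xpredT) (F := fun j => lam (cst j))).
  rewrite -gE /M1; lra.
Qed.

Lemma max_part (W : 'M[R]_(m, n)) : channel W ->
  is_maxP W 1 (\sum_(j < n) col_min W j).
Proof.
move=> [W0 Wr].
have m0 : (0 < m)%N by apply: ltnW.
have Wle1 i j : W i j <= 1 := entry_le i j W0 Wr.
have ale i j : col_min W j <= W i j.
  rewrite /col_min; exact: (bigmin_le 1 i (fun i => W i j)).
have a0 j : 0 <= col_min W j.
  by apply: le_bigmin => // i _; apply: W0.
split.
- pose s := 1 - \sum_j col_min W j.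
  pose V := \matrix_(i, j) (W i j - col_min W j) : 'M[R]_(m, n).
  have V0 i j : 0 <= V i j by rewrite mxE subr_ge0.
  have Vr i : \sum_j V i j = s.
    by under eq_bigr => j _ do rewrite mxE; rewrite sumrB Wr.
  have hg : good V s.
    split => // j.
    have [ij _ hij] := @eq_bigmin _ R _ 1 (Ordinal m0) xpredT (fun i => W i j) isT
      (fun i _ => Wle1 i j).
    have aE : col_min W j = W ij j := hij.
    have : colsum V j <= \sum_(i : 'I_m) s * (1 - (i == ij)%:R).
      apply: ler_sum => i _; case: (i =P ij) => [->|_].
        by rewrite mxE aE subrr /= mulr1n subrr mulr0.
      by rewrite /= mulr0n subr0 mulr1; apply: entry_le.
    by rewrite -mulr_sumr sumrB sum_const_R card_ord sum_delta1 mulrC.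
  have hWV : forall i j, W i j = V i j + col_min W j by move=> i j; rewrite mxE subrK.
  have hs : \sum_j col_min W j + s = 1 by rewrite /s addrC subrK.
  have [lam [hL hP]] := G hm a0 hg hWV hs.
  by exists lam.
- move=> lam hL; rewrite P_lam_eq //; apply: ler_sum => j _.
  apply: le_bigmin => [|i _]; first exact: (lam_le1 _ hL).
  exact: lam_cst_le.
Qed.

End Parts.

Theorem proposition7 (R : realFieldType) (m n : nat)
  (hm : (2 <= m)%N) (hn : (2 <= n)%N) (W : 'M[R]_(m, n)) (hW : channel W) :
  is_minP W 1 (pos_part (max_colsum W - m%:R + 1)) /\
  is_maxP W 1 (\sum_(j < n) col_min W j).
Proof.
have hn0 : (0 < n)%N by apply: ltnW.
split; [exact: min_part | exact: max_part].
Qed.
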